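(* Let $\mathbf{C}$ be a category enriched over $\mathbf{Top}$ and let $\mathfrak{G} = (G_A)_{A \in \mathrm{Ob}(\mathbf{C})}$ be a family of groups with $G_A \le \mathrm{Aut}_\mathbf{C}(A)$ for all $A$. Let $A, S \in \mathrm{Ob}(\mathbf{C})$ be such that $\hom(A,S)$ is locally compact second-countable Hausdorff and $\mathrm{Aut}_\mathbf{C}(A)$ is a finite discrete group, and let $q_{AS} : \hom(A,S) \to \binom{S}{A}_\mathfrak{G}$, $f \mapsto f/{\sim_\mathfrak{G}}$, be the quotient map. Then for every Borel set $W \subseteq \hom(A,S)$, the set $q_{AS}(W)$ is Borel in $\binom{S}{A}_\mathfrak{G}$.
   Context: A category is enriched over $\mathbf{Top}$ if each homset is a topological space and composition is continuous. $\mathrm{Aut}_\mathbf{C}(A)$ is the group of invertible morphisms $A \to A$ (with the topology inherited from $\hom(A,A)$). For $f, g \in \hom(A,S)$, $f \sim_\mathfrak{G} g$ iff $f = g \cdot \alpha$ for some $\alpha \in G_A$; $\binom{S}{A}_\mathfrak{G} = \hom(A,S)/{\sim_\mathfrak{G}}$ carries the quotient topology (the finest topology making $q_{AS}$ continuous). *)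

(* Defs.v *)
From HB Require Import structures.
From mathcomp Require Import all_boot all_algebra.
From mathcomp Require Import all_classical all_reals all_analysis.
Unset Printing Implicit Defensive.
Local Open Scope classical_set_scope.

Record TopCat := {
  ObC : Type;
  HomC : ObC -> ObC -> topologicalType;
  idm : forall A, HomC A A;
  comp : forall A B C, HomC B C -> HomC A B -> HomC A C;
  comp_assoc : forall A B C D (h : HomC C D) (g : HomC B C) (f : HomC A B),
      comp A C D h (comp A B C g f) = comp A B D (comp B C D h g) f;
  comp_idl : forall A B (f : HomC A B), comp A B B (idm B) f = f;
  comp_idr : forall A B (f : HomC A B), comp A A B f (idm A) = f;
  comp_cont : forall A B C,
      continuous (fun p : HomC B C * HomC A B => comp A B C p.1 p.2)
}.

Arguments comp {t A B C}.
Arguments idm {t} A.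
Arguments HomC : clear implicits.
Arguments ObC : clear implicits.

Section Defs.
Variable C : TopCat.

Definition AutC (A : ObC C) : set (HomC C A A) :=
  [set f | exists g : HomC C A A, comp g f = idm A /\ comp f g = idm A].

Definition subgroup_of_Aut (A : ObC C) (G : set (HomC C A A)) : Prop :=
  [/\ G `<=` AutC A, G (idm A),
      (forall f g, G f -> G g -> G (comp f g)) &
      (forall f g, G f -> comp g f = idm A -> comp f g = idm A -> G g)].

Definition finite_discrete_Aut (A : ObC C) : Prop :=
  finite_set (AutC A) /\
  forall a, AutC A a -> exists U : set (HomC C A A), open U /\ U `&` AutC A = [set a].

Variable GG : forall A : ObC C, set (HomC C A A).

Definition simG (A S : ObC C) (f g : HomC C A S) : Prop :=
  exists2 alpha, GG A alpha & f = comp g alpha.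

Definition gclass (A S : ObC C) (f : HomC C A S) : set (HomC C A S) :=
  [set g | simG A S g f].

Definition binomG (A S : ObC C) : Type :=
  {X : set (HomC C A S) | exists f, X = gclass A S f}.

Definition qAS (A S : ObC C) (f : HomC C A S) : binomG A S :=
  exist _ (gclass A S f) (ex_intro _ f erefl).

(* quotient topology: the finest topology making q_AS continuous *)
Definition quot_open (A S : ObC C) (U : set (binomG A S)) : Prop :=
  open (qAS A S @^-1` U).

Definition quot_borel (A S : ObC C) : set (set (binomG A S)) :=
  <<s quot_open A S >>.

End Defs.

Definition borel_top (T : topologicalType) : set (set T) := <<s open >>.

(* Main.v *)
Require Import Defs.
From HB Require Import structures.
From mathcomp Require Import all_boot all_algebra.
From mathcomp Require Import all_classical all_reals all_analysis.
Local Open Scope classical_set_scope.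

Section Proof4.
Variable C : TopCat.
Variable GG : forall A : ObC C, set (HomC C A A).
Hypothesis HG : forall A : ObC C, subgroup_of_Aut C A (GG A).
Variables A S : ObC C.

Local Notation cmp := Defs.comp.
Local Notation X := (HomC C A S).
Local Notation q := (qAS C GG A S).
Local Notation QB := (quot_borel C GG A S).

Lemma QB0 : QB set0. Proof. exact: sigma_algebra0. Qed.
Lemma QBC Z : QB Z -> QB (~` Z).
Proof. by move=> h; rewrite -setTD; apply: sigma_algebraCD. Qed.
Lemma QBU (Z : (set _)^nat) : (forall n, QB (Z n)) -> QB (\bigcup_n Z n).
Proof. exact: sigma_algebra_bigcup. Qed.
Lemma QBU2 Z1 Z2 : QB Z1 -> QB Z2 -> QB (Z1 `|` Z2).
Proof. move=> h1 h2; rewrite -bigcup2E; apply: QBU => -[|[|n]] //=; exact: QB0. Qed.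
Lemma QBI Z1 Z2 : QB Z1 -> QB Z2 -> QB (Z1 `&` Z2).
Proof. move=> h1 h2; rewrite -[_ `&` _]setCK setCI; apply: QBC; apply: QBU2; exact: QBC. Qed.

Lemma inv_in_G a : GG A a -> exists2 b, GG A b & cmp a b = idm A /\ cmp b a = idm A.
Proof.
case: (HG A) => sub _ _ cl Ga.
have [b [ba ab]] := sub a Ga.
exists b; [exact: (cl a b Ga ba ab) | by split].
Qed.

Lemma qeq f g : q f = q g -> exists2 a, GG A a & f = cmp g a.
Proof.
move=> /(congr1 sval) /= E.
have : gclass C GG A S f f.
  by exists (idm A); [case: (HG A) | rewrite comp_idr].
by rewrite E.
Qed.

Lemma qcomp f a : GG A a -> q (cmp f a) = q f.
Proof.
move=> Ga; rewrite /qAS; apply: eq_exist; apply/funext => g; apply/propext; split.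
- case=> b Gb ->; exists (cmp a b); first by case: (HG A) => _ _ + _; apply.
  by rewrite comp_assoc.
- case=> b Gb ->; have [a' Ga' [aa' a'a]] := inv_in_G _ Ga.
  exists (cmp a' b); first by case: (HG A) => _ _ + _; apply.
  by rewrite comp_assoc -[cmp (cmp f a) a']comp_assoc aa' comp_idr.
Qed.

Lemma ra_cont (a : HomC C A A) : continuous (fun f : X => cmp f a).
Proof.
move=> f.
apply: (@continuous_comp _ _ _ (fun f : X => (f, a)) (fun p : X * HomC C A A => cmp p.1 p.2)).
  by apply: cvg_pair; [exact: cvg_id | exact: cvg_cst].
exact: comp_cont.
Qed.

Lemma satE (Y : set X) : q @^-1` (q @` Y) = \bigcup_(a in GG A) ((fun f : X => cmp f a) @^-1` Y).
Proof.
apply/seteqP; split => f /=.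
- case=> y Yy /qeq [a Ga yE]; exists a => //=; by rewrite -yE.
- case=> a Ga /= Yfa; exists (cmp f a) => //; exact: qcomp.
Qed.

Lemma closed_pre (T U : topologicalType) (h : T -> U) (Y : set U) :
  continuous h -> closed Y -> closed (h @^-1` Y).
Proof.
move=> ch cY; rewrite -[Y]setCK preimage_setC; apply: open_closedC.
exact: (open_comp (fun x _ => ch x) (closed_openC cY)).
Qed.

Hypothesis Hfin : finite_set (GG A).

Lemma QB_closed (Y : set X) : closed Y -> QB (q @` Y).
Proof.
move=> cY; rewrite -[q @` Y]setCK; apply: QBC; apply: sub_sigma_algebra.
rewrite /quot_open.
have -> : q @^-1` (~` (q @` Y)) = ~` (q @^-1` (q @` Y)) by [].
rewrite satE; apply: closed_openC.
apply: closed_bigcup => // a _; exact: closed_pre (ra_cont a) cY.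
Qed.


Hypothesis hs : hausdorff_space X.

Lemma closed_fix (a : HomC C A A) : closed [set y : X | cmp y a = y].
Proof.
rewrite -[X in closed X]setCK; apply: open_closedC; rewrite openE => y /= ny.
have hs' := hs; rewrite open_hausdorff in hs'.
have /hs' [[U V] /= [yaU yV] [oU oV /eqP UV0]] : cmp y a != y by apply/eqP.
rewrite inE in yaU; rewrite inE in yV.
rewrite /interior nbhsE; exists (V `&` (fun f : X => cmp f a) @^-1` U).
  split; first by apply: openI => //; exact: (open_comp (fun x _ => ra_cont a x) oU).
  by split.
move=> z [Vz Uz] /= E; have Uz2 : U (cmp z a) := Uz; rewrite E in Uz2.
have : (U `&` V) z by split.
by rewrite UV0.
Qed.

Hypothesis Hreg : regular_space X.
Variable e : nat -> set X.
Hypothesis e_open : forall n, open (e n).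
Hypothesis e_basis : forall x (N : set X), nbhs x N -> exists2 n, e n x & e n `<=` N.

Lemma QB_openI_closed (O F : set X) : open O -> closed F -> QB (q @` (O `&` F)).
Proof.
move=> oO cF.
pose V n := if `[< closure (e n) `<=` O >] then closure (e n) else set0.
have -> : O `&` F = \bigcup_n (V n `&` F).
  apply/seteqP; split.
  - move=> x [Ox Fx].
    have [N Nx cN] : exists2 N, nbhs x N & closure N `<=` O.
      have := Hreg x O (open_nbhs_nbhs (conj oO Ox)).
      by case=> N Nx cN; exists N.
    have [n enx enN] := e_basis _ _ Nx.
    have cO : closure (e n) `<=` O by apply: subset_trans cN; exact: closureS.
    exists n => //; split => //.
    rewrite /V; case: asboolP => // _; exact: subset_closure.
  - move=> x [n _ [Vx Fx]]; split => //.
    move: Vx; rewrite /V; case: asboolP => // h /h //.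
rewrite image_bigcup; apply: QBU => n; apply: QB_closed; apply: closedI => //.
rewrite /V; case: asboolP => _; [exact: closed_closure | exact: closed0].
Qed.

Lemma QB_piece (P : set X) : (forall x y, P x -> P y -> q x = q y -> x = y) ->
  (forall O, open O -> QB (q @` (O `&` P))) ->
  forall B, borel_top X B -> QB (q @` (B `&` P)).
Proof.
move=> inj HO.
have HP : QB (q @` P) by rewrite -[P]setTI; exact: HO openT.
apply: (smallest_sub (X:=[set B | QB (q @` (B `&` P))])) => //.
split => /=.
- by rewrite set0I image_set0; exact: QB0.
- move=> B' hB'.
  have -> : q @` ((setT `\` B') `&` P) = q @` P `&` ~` (q @` (B' `&` P)).
    apply/seteqP; split.
    + move=> _ [x [[_ nB] Px] <-]; split; first by exists x.
      move=> [y [B'y Py] /(inj _ _ Py Px) yx]; apply: nB; by rewrite -yx.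
    + move=> _ [[x Px <-] nq]; exists x => //; split => //; split => // B'x.
      by apply: nq; exists x.
  by apply: QBI => //; apply: QBC.
- move=> F hF; rewrite setI_bigcupl image_bigcup; exact: QBU.
Qed.


Lemma main_sec (W : set X) : borel_top X W -> QB (q @` W).
Proof.
move=> bW.
pose H n := [set a | GG A a /\ exists2 y, e n y & e n (cmp y a)].
pose Fx n := [set y : X | forall a, H n a -> cmp y a = y].
pose P n := e n `&` Fx n.
have cF n : closed (Fx n).
  have -> : Fx n = \bigcap_(a in H n) [set y | cmp y a = y].
    by apply/seteqP; split => y /=.
  apply: closed_bigI => a _; exact: closed_fix.
have injP n x y : P n x -> P n y -> q x = q y -> x = y.
  move=> [ex Fxx] [ey Fyy] /qeq [a Ga xE].
  rewrite xE; apply: Fyy; split => //; exists y => //; by rewrite -xE.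
have QP n : QB (q @` (W `&` P n)).
  apply: QB_piece => //; first exact: injP.
  move=> O oO; rewrite setIA; apply: QB_openI_closed => //; exact: openI.
have cover : W = \bigcup_n (W `&` P n).
  apply/seteqP; split; last by move=> x [n _ []].
  move=> x Wx.
  pose D := [set a | GG A a /\ cmp x a <> x].
  have /choice [f hf] : forall a, exists U : set X,
      D a -> [/\ open U, U x & forall z, U z -> ~ U (cmp z a)].
    move=> a; have [Da|nDa] := pselect (D a); last by exists setT.
    have hs' := hs; rewrite open_hausdorff in hs'.
    have /hs' [[U V] /= [xU xaV] [oU oV /eqP UV0]] : x != cmp x a.
      by apply/eqP => E; apply: Da.2; rewrite -E.
    rewrite inE in xU; rewrite inE in xaV.
    exists (U `&` (fun g : X => cmp g a) @^-1` V) => _; split.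
    - by apply: openI => //; exact: (open_comp (fun x _ => ra_cont a x) oV).
    - by split.
    - move=> z [Uz Vz] [Uza _].
      have : (U `&` V) (cmp z a) by split.
      by rewrite UV0.
  have finD : finite_set D by apply: sub_finite_set Hfin => a [].
  have [Df DE] := (finite_fsetP (T:=HomC C A A)).1 finD.
  have Nx : nbhs x (\bigcap_(i in D) f i).
    rewrite DE; apply: filter_bigI => i iD.
    have Di : D i by rewrite DE.
    have [oU Ux _] := hf i Di.
    by apply: open_nbhs_nbhs.
  have [n enx enN] := e_basis _ _ Nx.
  exists n => //; split => //; split => // a [Ga [y ey eya]].
  apply: contrapT => nxa.
  have Da : D a by [].
  have [_ _ hz] := hf a Da.
  by apply: (hz y); [exact: enN | exact: enN].
rewrite cover image_bigcup; exact: QBU.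
Qed.

End Proof4.

Theorem lemma4p4 (C : TopCat) (GG : forall A : ObC C, set (HomC C A A))
  (HG : forall A : ObC C, subgroup_of_Aut C A (GG A))
  (A S : ObC C)
  (Hlc : @locally_compact (HomC C A S) [set: HomC C A S])
  (Hsc : @second_countable (HomC C A S))
  (Hhs : @hausdorff_space (HomC C A S))
  (Haut : finite_discrete_Aut C A)
  (W : set (HomC C A S)) :
  borel_top (HomC C A S) W -> quot_borel C GG A S (qAS C GG A S @` W).
Proof.
have Hfin : finite_set (GG A).
  by apply: sub_finite_set Haut.1; case: (HG A).
have Hreg : regular_space (HomC C A S).
  move=> x; have [U hU [cU _]] := Hlc x I.
  apply: (compact_regular Hhs cU).
  by rewrite withinET in hU.
case: Hsc => B cB [Bop Bb].
have [g Hg] := pcard_surjP cB.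
pose e n := if `[< open (g n) >] then g n else set0.
apply: (@main_sec C GG HG A S Hfin Hhs Hreg e).
- move=> n; rewrite /e; case: asboolP => // _; exact: open0.
- move=> x N Nx.
  have [U [BU Ux] UN] := Bb x N Nx.
  have [n _ gn] := Hg U BU.
  have oU : open (g n) by rewrite gn; exact: Bop.
  exists n; rewrite /e; case: asboolP => // _; rewrite gn //.
Qed.
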